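(* Let $X$ be a nonnegative integer-valued random variable whose distribution $p_i=\Pr[X=i]$ is log-concave. Then $X$ is moment bounded with parameter $L=1+\mathbb E[|X|]$.
   Context: A distribution $(p_i)_{i\in\mathbb Z}$ on the integers is log-concave if $p_{i+1}^2\ge p_ip_{i+2}$ for all $i$. A random variable $Z$ is moment bounded with parameter $L>0$ if for every integer $i\ge1$, $\mathbb E[|Z|^i]\le iL\,\mathbb E[|Z|^{i-1}]$.
   Formalization: Log-concavity of the distribution pᵢ also excludes internal zeros: whenever i < j < k with pᵢ > 0 and pₖ > 0, also pⱼ > 0, so the support of X is a contiguous set of integers. The statement above fails without it. *)

(* Defs.v *)
From HB Require Import structures.
From mathcomp Require Import all_boot all_order all_algebra.
From mathcomp Require Import all_classical all_reals all_analysis.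
Set Implicit Arguments. Unset Strict Implicit. Unset Printing Implicit Defensive.
Import Order.TTheory GRing.Theory Num.Theory.
Local Open Scope ring_scope.
Local Open Scope ereal_scope.

Definition is_nat_distribution (R : realType) (p : nat -> R) : Prop :=
  (forall i, (0 <= p i)%R) /\ \sum_(0 <= i <oo) (p i)%:E = 1.

Definition extZ (R : realType) (p : nat -> R) (z : int) : R :=
  match z with Posz n => p n | Negz _ => 0%R end.

(* Log-concavity on the integers as in the paper: p_{i+1}^2 >= p_i p_{i+2},
   together with the standard convention that the support has no internal
   zeros. *)
Definition log_concaveZ (R : realType) (q : int -> R) : Prop :=
  (forall i : int, q i * q (i + 2%:Z) <= q (i + 1%:Z) ^+ 2)%R /\
  (forall i j k : int, (i < j)%R -> (j < k)%R ->
     (0 < q i)%R -> (0 < q k)%R -> (0 < q j)%R).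

Definition nat_moment (R : realType) (p : nat -> R) (i : nat) : \bar R :=
  \sum_(0 <= k <oo) ((k%:R ^+ i * p k)%R)%:E.

Definition moment_bounded (R : realType) (p : nat -> R) (L : \bar R) : Prop :=
  0 < L /\
  forall i : nat, (1 <= i)%N ->
    nat_moment p i <= (i%:R)%:E * L * nat_moment p i.-1.

(* Main.v *)
Require Import Defs.
From HB Require Import structures.
From mathcomp Require Import all_boot all_order all_algebra.
From mathcomp Require Import all_classical all_reals all_analysis.
From mathcomp Require Import ring lra zify.
From Stdlib Require Import Lia.
Import Order.TTheory GRing.Theory Num.Theory.
Local Open Scope ring_scope.

Section LC.
Variable (R : realType) (p : nat -> R).
Hypothesis p0 : forall k, 0 <= p k.
Hypothesis lc : forall k, p k * p (k + 2)%N <= p (k + 1)%N ^+ 2.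
Hypothesis nz : forall a b c, (a < b < c)%N -> 0 < p a -> 0 < p c -> 0 < p b.

Lemma ratio_mono k d : (forall t, (k <= t <= k + d + 1)%N -> 0 < p t) ->
  p (k + d + 1)%N * p k <= p (k + d)%N * p (k + 1)%N.
Proof.
elim: d => [|d IH] H; first by rewrite addn0 mulrC.
have IH' := IH (fun t Ht => H t (ltac:(move/andP: Ht => [? ?]; apply/andP; split => //; lia))).
have L := lc (k + d).
have e1 : (k + d + 2 = k + d.+1 + 1)%N by lia.
have e2 : (k + d + 1 = k + d.+1)%N by lia.
rewrite e1 e2 in L. rewrite e2 in IH'.
have Pk : 0 < p k by apply: H; lia.
have Pkd : 0 < p (k + d)%N by apply: H; lia.
have Pkd1 : 0 < p (k + d.+1)%N by apply: H; lia.
have Pk1 : 0 < p (k + 1)%N by apply: H; lia.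
have Pkd2 : 0 <= p (k + d.+1 + 1)%N by apply: p0.
rewrite -(ler_pM2r (mulr_gt0 Pkd Pkd1)).
set a := p k; set b := p (k+1)%N; set x := p (k+d)%N; set y := p (k+d.+1)%N; set z := p (k + d.+1 + 1)%N.
have -> : z * a * (x * y) = (x * z) * (a * y) by ring.
have -> : y * b * (x * y) = y ^+ 2 * (x * b) by rewrite expr2; ring.
apply: ler_pM.
- by apply: mulr_ge0; [apply: ltW|].
- by apply: mulr_ge0; apply: ltW.
- exact: L.
- by rewrite mulrC; exact: IH'.
Qed.

Lemma lc_gen a d c : (forall t, (a <= t <= a + d + c)%N -> 0 < p t) ->
  p a * p (a + d + c)%N <= p (a + d)%N * p (a + c)%N.
Proof.
elim: d => [|d IH] H; first by rewrite !addn0.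
have IH' := IH (fun t Ht => H t (ltac:(move/andP: Ht => [? ?]; apply/andP; split => //; lia))).
have RL := @ratio_mono (a + d)%N c
  (fun t Ht => H t (ltac:(move/andP: Ht => [? ?]; apply/andP; split; lia))).
have e1 : (a + d + c + 1 = a + d.+1 + c)%N by lia.
have e2 : (a + d + 1 = a + d.+1)%N by lia.
rewrite e1 e2 in RL.
have Pv : 0 < p (a + d)%N by apply: H; lia.
have Ps : 0 < p (a + d + c)%N by apply: H; lia.
rewrite -(ler_pM2r (mulr_gt0 Pv Ps)).
set u := p a; set v := p (a + d)%N; set w := p (a + c)%N; set s := p (a + d + c)%N.
set t := p (a + d.+1 + c)%N; set q := p (a + d.+1)%N.
have -> : u * t * (v * s) = (u * s) * (t * v) by ring.
have -> : q * w * (v * s) = (v * w) * (s * q) by ring.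
apply: ler_pM => //.
- by apply: mulr_ge0; apply: p0.
- by apply: mulr_ge0; apply: p0.
Qed.

Lemma lc_key n m c : (n <= m)%N -> p n * p (m + c)%N <= p m * p (n + c)%N.
Proof.
move=> nm.
have [Hn|Hn] := eqVneq (p n) 0; first by rewrite Hn mul0r; apply: mulr_ge0.
have [Hm|Hm] := eqVneq (p (m + c)%N) 0; first by rewrite Hm mulr0; apply: mulr_ge0.
have Pn : 0 < p n by rewrite lt0r Hn p0.
have Pm : 0 < p (m + c)%N by rewrite lt0r Hm p0.
have Pos : forall t, (n <= t <= n + (m - n) + c)%N -> 0 < p t.
  move=> t /andP [h1 h2].
  have [e|ne] := eqVneq t n; first by rewrite e.
  have [e'|ne'] := eqVneq t (m + c)%N; first by rewrite e'.
  apply: (@nz n t (m + c)%N) => //; apply/andP; split; lia.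
have := @lc_gen n (m - n) c Pos.
have -> : (n + (m - n) = m)%N by lia.
by [].
Qed.
End LC.

Module Fin27.
Local Close Scope ring_scope.
Lemma pow_step k j : ((k + 1) ^ j.+1 <= k ^ j.+1 + j.+1 * (k + 1) ^ j)%N.
Proof.
elim: j => [|j IH]; first by rewrite !expn1 expn0; lia.
have H2 : (k ^ j.+1 <= (k+1)%N ^ j.+1)%N by rewrite leq_exp2r //; lia.
move: IH H2; rewrite !(expnS k) !(expnS (k+1)%N).
move: (k ^ j) ((k + 1) ^ j) => a b. nia.
Qed.

Lemma sum_pow k j : (k ^ j.+1 <= j.+1 * \sum_(m < k.+1) m ^ j)%N.
Proof.
elim: k => [|k IH]; first by rewrite exp0n.
rewrite big_ord_recr /= mulnDr.
have := pow_step k j. rewrite addn1. move=> H.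
apply: (leq_trans H). by rewrite leq_add2r.
Qed.



Local Open Scope ring_scope.
Section Fin.
Variable (R : realFieldType) (p : nat -> R).
Hypothesis p0 : forall k, 0 <= p k.
Hypothesis K : forall n m c, (n <= m)%N -> p n * p (m + c)%N <= p m * p (n + c)%N.
Variable N : nat.

Definition T m := \sum_(m <= k < N) p k.

Lemma T_ge0 m : 0 <= T m.
Proof. by apply: sumr_ge0 => k _; apply: p0. Qed.

Lemma T_shift m : T m = \sum_(0 <= c < N - m) p (c + m)%N.
Proof. by rewrite /T -{1}[m]add0n big_addn. Qed.

Lemma Tmono n m : (n <= m)%N -> p n * T m <= p m * T n.
Proof.
move=> nm; rewrite (T_shift m) (T_shift n).
have hh : (N - m <= N - n)%N by lia.
rewrite [in X in _ <= X](big_cat_nat _ (n := (N - m)%N)) //=.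
rewrite mulrDr mulr_sumr mulr_sumr.
rewrite -[X in X <= _]addr0; apply: lerD.
  apply: ler_sum => c _. by rewrite ![(c + _)%N]addnC K.
apply: mulr_ge0 => //; apply: sumr_ge0 => c _; exact: p0.
Qed.

Lemma Tord m : T m = \sum_(k < N | (m <= k)%N) p k.
Proof. by rewrite /T big_geq_mkord. Qed.

Definition M := \sum_(k < N) p k.
Definition A j := \sum_(k < N) (k%:R) ^+ j * p k.
Definition S j := \sum_(m < N) (m%:R) ^+ j * T m.

Lemma partA j : A j.+1 <= j.+1%:R * S j.
Proof.
rewrite /S.
under eq_bigr => m _ do rewrite Tord mulr_sumr big_mkcond /=.
rewrite exchange_big /= mulr_sumr /A; apply: ler_sum => k _.
rewrite -big_mkcond /= -mulr_suml mulrA; apply: ler_wpM2r => //.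
have kN : (k.+1 <= N)%N by exact: ltn_ord.
have := sum_pow k j.
rewrite -(ler_nat R) natrM natrX natr_sum => H; apply: (le_trans H).
rewrite ler_pM2l ?ltr0Sn //.
rewrite (big_ord_widen N (fun m => (m ^ j)%:R) kN).
under eq_bigr => i _ do rewrite natrX.
exact: lexx.
Qed.

Lemma sumT : \sum_(n < N) T n = M + A 1.
Proof.
under eq_bigr => n _ do rewrite Tord big_mkcond /=.
rewrite exchange_big /M /A -big_split /=; apply: eq_bigr => k _.
rewrite -big_mkcond /= sumr_const expr1.
have kN : (k.+1 <= N)%N by exact: ltn_ord.
have -> : #|[pred i : 'I_N | (i <= k)%N]| = k.+1.
  rewrite -[RHS](card_ord k.+1) -!sum1_card.
  by rewrite (big_ord_widen N (fun _ => 1%N) kN).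
by rewrite mulrS mulr_natl.
Qed.

Lemma cheb j : M * S j <= A j * \sum_(n < N) T n.
Proof.
set f := fun m : nat => (m%:R : R) ^+ j.
pose h (n m : 'I_N) := f m * (p m * T n - p n * T m).
have E : A j * \sum_(n < N) T n - M * S j = \sum_(n < N) \sum_(m < N) h n m.
  have e1 : A j * \sum_(n < N) T n = \sum_(n < N) \sum_(m < N) f m * p m * T n.
    rewrite mulr_sumr; apply: eq_bigr => n _; by rewrite /A mulr_suml.
  have e2 : M * S j = \sum_(n < N) \sum_(m < N) p n * (f m * T m).
    rewrite /M mulr_suml; apply: eq_bigr => n _; by rewrite /S mulr_sumr.
  rewrite e1 e2 -sumrB; apply: eq_bigr => n _.
  rewrite -sumrB; apply: eq_bigr => m _.
  rewrite /h /f; ring.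
have D : 0 <= \sum_(n < N) \sum_(m < N) h n m.
  have E2 : \sum_(n < N) \sum_(m < N) h n m = \sum_(n < N) \sum_(m < N) h m n.
    by rewrite exchange_big.
  suff : 0 <= \sum_(n < N) \sum_(m < N) (h n m + h m n).
    rewrite (eq_bigr (fun n => \sum_(m < N) h n m + \sum_(m < N) h m n)); last first.
      by move=> n _; rewrite big_split.
    rewrite big_split /= -E2. lra.
  apply: sumr_ge0 => n _; apply: sumr_ge0 => m _.
  have -> : h n m + h m n = (f m - f n) * (p m * T n - p n * T m) by rewrite /h; ring.
  have fmono : forall a b : nat, (a <= b)%N -> f a <= f b.
    by move=> a b ab; apply: lerXn2r; rewrite ?nnegrE ?ler0n ?ler_nat.
  have [nm|mn] := leqP n m.
    apply: mulr_ge0; first by rewrite subr_ge0 fmono.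
    by rewrite subr_ge0; apply: Tmono.
  apply: mulr_le0; first by rewrite subr_le0 fmono // ltnW.
  by rewrite subr_le0; apply: Tmono; rewrite ltnW.
move: E D; lra.
Qed.

Lemma finite_ineq j : M * A j.+1 <= j.+1%:R * (M + A 1) * A j.
Proof.
have M0 : 0 <= M by apply: sumr_ge0 => k _; exact: p0.
apply: (le_trans (y := M * (j.+1%:R * S j))); first by apply: ler_wpM2l => //; exact: partA.
rewrite mulrCA -sumT [X in _ <= X]mulrAC -[X in _ <= X]mulrA.
by apply: ler_wpM2l => //; exact: cheb.
Qed.
End Fin.

End Fin27.

Local Open Scope ring_scope.

Section Series.
Variable R : realType.

Lemma psum_mono (u : nat -> R) (u0 : forall k, 0 <= u k) a b : (a <= b)%N ->
  \sum_(k < a) u k <= \sum_(k < b) u k.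
Proof.
move=> ab; rewrite (big_ord_widen b u ab) [X in _ <= X](bigID (fun k : 'I_b => (k < a)%N)) /=.
by rewrite lerDl; apply: sumr_ge0 => k _.
Qed.

Lemma ps_le (u : nat -> R) (u0 : forall k, 0 <= u k) N :
  ((\sum_(k < N) u k)%:E <= \sum_(0 <= k <oo) (u k)%:E)%E.
Proof.
have -> : (\sum_(k < N) u k)%:E = \sum_(0 <= k < N) (u k)%:E by rewrite sumEFin big_mkord.
by apply: nneseries_lim_ge => n _ _; rewrite lee_fin.
Qed.

Lemma ser_le (u : nat -> R) (u0 : forall k, 0 <= u k) (x : \bar R) :
  (forall N, ((\sum_(k < N) u k)%:E <= x)%E) -> (\sum_(0 <= k <oo) (u k)%:E <= x)%E.
Proof.
move=> H; apply: lime_le.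
  by apply: is_cvg_nneseries => n _ _; rewrite lee_fin.
apply: nearW => N /=; rewrite sumEFin big_mkord; exact: H.
Qed.
End Series.

Local Open Scope ereal_scope.

Theorem lemma27 (R : realType) (p : nat -> R) :
  is_nat_distribution p ->
  log_concaveZ (extZ p) ->
  moment_bounded p (1 + nat_moment p 1).
Proof.
move=> [p0 psum] [lc1 lc2].
have lcn : forall k, (p k * p (k + 2)%N <= p (k + 1)%N ^+ 2)%R.
  by move=> k; have := lc1 (Posz k); rewrite -!PoszD.
have nzn : forall a b c, (a < b < c)%N -> (0 < p a)%R -> (0 < p c)%R -> (0 < p b)%R.
  move=> a b c /andP [ab bc] pa pc.
  by have := lc2 (Posz a) (Posz b) (Posz c); rewrite !ltz_nat; apply.
have K := @lc_key R p p0 lcn nzn.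
have mom_ge0 : forall j, 0 <= nat_moment p j.
  move=> j; apply: nneseries_ge0 => n _ _; rewrite lee_fin.
  by apply: mulr_ge0 => //; apply: exprn_ge0.
have termge0 : forall j k, (0 <= (k%:R : R) ^+ j * p k)%R.
  by move=> j k; apply: mulr_ge0 => //; apply: exprn_ge0.
split.
  apply: (lt_le_trans (y := 1)) => //.
  by rewrite -[X in X <= _]adde0; apply: leeD => //.
case => [//|j] _ /=.
set C := ((j.+1)%:R)%:E * (1 + nat_moment p 1) * nat_moment p j.
have C0 : 0 <= C by apply: mule_ge0; [apply: mule_ge0 => //; apply: adde_ge0|].
have Mle1 : forall N, (@Fin27.M R p N)%:E <= 1.
  by move=> N; rewrite -psum; apply: ps_le.
have Ale : forall N i, (@Fin27.A R p N i)%:E <= nat_moment p i.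
  by move=> N i; apply: ps_le.
have M0 : forall N, (0 <= @Fin27.M R p N)%R by move=> N; apply: sumr_ge0.
have A0 : forall N i, (0 <= @Fin27.A R p N i)%R by move=> N i; apply: sumr_ge0.
have step1 : forall N, (@Fin27.M R p N * @Fin27.A R p N j.+1)%:E <= C.
  move=> N.
  have := @Fin27.finite_ineq R p p0 K N j; rewrite -lee_fin => H.
  apply: (le_trans H); rewrite !EFinM EFinD /C.
  apply: lee_pmul => //.
  - by apply: mule_ge0 => //; rewrite lee_fin; apply: addr_ge0.
  - by rewrite lee_fin.
  - apply: lee_pmul => //; first by rewrite lee_fin; apply: addr_ge0.
    by apply: leeD.
have step2 : forall N0 N, (@Fin27.M R p N0 * @Fin27.A R p N j.+1)%:E <= C.
  move=> N0 N; apply: le_trans (step1 (maxn N0 N)).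
  rewrite lee_fin; apply: ler_pM => //.
  - by apply: (@psum_mono R p p0); apply: leq_maxl.
  - by apply: (@psum_mono R (fun k => k%:R ^+ j.+1 * p k)%R (termge0 j.+1)); apply: leq_maxr.
have key : forall N0, (@Fin27.M R p N0)%:E * nat_moment p j.+1 <= C.
  move=> N0; rewrite /nat_moment -nneseriesZl; last by move=> k _; rewrite lee_fin.
  have -> : \sum_(0 <= k <oo) ((@Fin27.M R p N0)%:E * ((k%:R ^+ j.+1 * p k)%R)%:E) =
            \sum_(0 <= k <oo) ((@Fin27.M R p N0 * (k%:R ^+ j.+1 * p k))%R)%:E.
    by apply: eq_eseriesr => k _; rewrite EFinM.
  apply: ser_le; first by move=> k; apply: mulr_ge0.
  move=> N; rewrite -mulr_sumr; exact: step2.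
have [N0 HN0] : exists N0, (0 < @Fin27.M R p N0)%R.
  case: (pselect (exists N0, (0 < @Fin27.M R p N0)%R)) => // H0.
  exfalso.
  have : \sum_(0 <= k <oo) (p k)%:E <= 0.
    apply: ser_le => // N.
    have h1 : ~ (0 < @Fin27.M R p N)%R by move=> h; apply: H0; exists N.
    rewrite lee_fin; move: (M0 N) h1; rewrite /Fin27.M; lra.
  by rewrite psum lee_fin ler10.
case E: (nat_moment p j.+1) => [r| |].
- have r0 : (0 <= r)%R by rewrite -lee_fin -E.
  have -> : r%:E = \sum_(0 <= k <oo) ((r * p k)%R)%:E.
    rewrite -[r%:E]mule1 -psum -nneseriesZl; last by move=> k _; rewrite lee_fin.
    by apply: eq_eseriesr => k _; rewrite EFinM.
  apply: ser_le; first by move=> k; apply: mulr_ge0.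
  move=> N; rewrite -mulr_sumr.
  by have := key N; rewrite E -EFinM mulrC.
- by have := key N0; rewrite E muleC gt0_mulye // lte_fin.
- by have := mom_ge0 j.+1; rewrite E.
Qed.
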